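(* Let $k\ge 1$, let $(\Lambda,d)$ be a $k$-graph, and let $p\in\mathbb{N}^k$. Then the dual $(p\Lambda,d_p)$ (defined in the context) is a $k$-graph.
   Context: A $k$-graph is a pair $(\Lambda,d)$ where $\Lambda$ is a countable category and $d:\Lambda\to\mathbb{N}^k$ is a functor satisfying the factorisation property: if $\lambda$ is a morphism with $d(\lambda)=m+n$, then there are unique morphisms $\mu\in d^{-1}(m)$, $\nu\in d^{-1}(n)$ with $\lambda=\mu\nu$. Morphisms are called paths; objects (vertices) are identified with the paths of degree $0$; $r$ and $s$ denote codomain and domain; $\Lambda^n:=d^{-1}(n)$. For $\lambda$ with $d(\lambda)=n$ and $l\le m\le n$ in $\mathbb{N}^k$, $\lambda(l,m)$ denotes the unique path with $d(\lambda(l,m))=m-l$ such that $\lambda=\lambda(0,l)\lambda(l,m)\lambda(m,n)$. For $p\in\mathbb{N}^k$, the dual $p\Lambda$ is defined as follows: its set of paths is $\{\lambda\in\Lambda: d(\lambda)\ge p\}$, its vertices are the elements of $\Lambda^p$, with range $r_p(\lambda):=\lambda(0,p)$, source $s_p(\lambda):=\lambda(d(\lambda)-p,d(\lambda))$, composition $\lambda\circ_p\mu:=\lambda\,\mu(p,d(\mu))$ $(=\lambda(0,d(\lambda)-p)\mu)$ whenever $s_p(\lambda)=r_p(\mu)$, and degree $d_p(\lambda):=d(\lambda)-p$. *)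

(* Defs.v *)
From Stdlib Require Import ClassicalEpsilon.
From mathcomp Require Import all_boot.
Set Implicit Arguments. Unset Strict Implicit. Unset Printing Implicit Defensive.

Definition Nk (k : nat) := {ffun 'I_k -> nat}.
Definition Nk_zero k : Nk k := [ffun _ => 0].
Definition Nk_add k (m n : Nk k) : Nk k := [ffun i => m i + n i].
(* truncated pointwise difference; only used when n <= m *)
Definition Nk_sub k (m n : Nk k) : Nk k := [ffun i => m i - n i].
Definition Nk_le k (m n : Nk k) : bool := [forall i, m i <= n i].

(** * (Small) categories: objects, morphisms, domain (source s),
     codomain (range r), identities and composition [comp f g] = f g
     (first g, then f), meaningful when [dom f = cod g]. *)
Record cat_data := CatData {
  Obj : Type;
  Mor : Type;
  dom : Mor -> Obj;
  cod : Mor -> Obj;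
  idm : Obj -> Mor;
  comp : Mor -> Mor -> Mor }.

Definition composable (C : cat_data) (f g : Mor C) : Prop := dom f = cod g.

Definition is_category (C : cat_data) : Prop :=
  (forall a : Obj C, dom (idm a) = a /\ cod (idm a) = a) /\
  (forall f g : Mor C, composable f g -> dom (comp f g) = dom g /\ cod (comp f g) = cod f) /\
  (forall f : Mor C, comp (idm (cod f)) f = f /\ comp f (idm (dom f)) = f) /\
  (forall f g h : Mor C, composable f g -> composable g h ->
      comp (comp f g) h = comp f (comp g h)).

Definition countable_type (T : Type) : Prop := exists f : T -> nat, injective f.

Record kgraph_data (k : nat) := KGraphData {
  kg_cat : cat_data;
  kg_deg : Mor kg_cat -> Nk k }.

Definition is_kgraph k (L : kgraph_data k) : Prop :=
  let C := kg_cat L in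
  let d := @kg_deg k L in
  [/\ is_category C, countable_type (Obj C) /\ countable_type (Mor C),
      (forall a : Obj C, d (idm a) = Nk_zero k),
      (forall f g : Mor C, composable f g -> d (comp f g) = Nk_add (d f) (d g)) &
      (forall (l : Mor C) (m n : Nk k), d l = Nk_add m n ->
         exists! mn : Mor C * Mor C,
           [/\ d mn.1 = m, d mn.2 = n, composable mn.1 mn.2 & l = comp mn.1 mn.2])].

Section Segments.
Variables (k : nat) (L : kgraph_data k).
Local Notation C := (kg_cat L).
Local Notation d := (@kg_deg k L).

Definition factor (l : Mor C) (m : Nk k) : Mor C * Mor C :=
  epsilon (inhabits (l, l)) (fun mn : Mor C * Mor C =>
    [/\ d mn.1 = m, d mn.2 = Nk_sub (d l) m, composable mn.1 mn.2 & l = comp mn.1 mn.2]).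

(* the segment l(a, b), for a <= b <= d l *)
Definition seg (l : Mor C) (a b : Nk k) : Mor C :=
  (factor (factor l a).2 (Nk_sub b a)).1.

Lemma Nk_subK (m n : Nk k) : Nk_le m n -> Nk_add m (Nk_sub n m) = n.
Proof.
move=> /forallP H; apply/ffunP => i; rewrite !ffunE subnKC //.
Qed.

Lemma factor_spec (HL : is_kgraph L) l m : Nk_le m (d l) ->
  [/\ d (factor l m).1 = m, d (factor l m).2 = Nk_sub (d l) m,
      composable (factor l m).1 (factor l m).2 & l = comp (factor l m).1 (factor l m).2].
Proof.
move=> Hm; rewrite /factor.
set P := (fun mn : Mor C * Mor C => _).
apply: (epsilon_spec (inhabits (l, l)) P).
move: HL; rewrite /is_kgraph => -[_ _ _ _ Hfac].
have [mn [Hmn _]] := Hfac l m (Nk_sub (d l) m) (esym (Nk_subK Hm)).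
by exists mn.
Qed.

Lemma seg_deg (HL : is_kgraph L) l a b :
  Nk_le a b -> Nk_le b (d l) -> d (seg l a b) = Nk_sub b a.
Proof.
move=> Hab Hbl.
have Hal : Nk_le a (d l).
  apply/forallP => i; apply: leq_trans (forallP Hab i) (forallP Hbl i).
have [_ H2 _ _] := factor_spec HL Hal.
have [H1 _ _ _] := factor_spec HL (l := (factor l a).2) (m := Nk_sub b a)
  ltac:(rewrite H2; apply/forallP => i; rewrite !ffunE;
        exact: leq_sub2r (forallP Hbl i)).
exact: H1.
Qed.

Lemma seg_range_deg (HL : is_kgraph L) (p : Nk k) l :
  Nk_le p (d l) -> d (seg l (Nk_zero k) p) = p.
Proof.
move=> Hp; rewrite seg_deg //; last by apply/forallP => i; rewrite ffunE.
by apply/ffunP => i; rewrite !ffunE subn0.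
Qed.

Lemma seg_source_deg (HL : is_kgraph L) (p : Nk k) l :
  Nk_le p (d l) -> d (seg l (Nk_sub (d l) p) (d l)) = p.
Proof.
move=> Hp; rewrite seg_deg //; last by apply/forallP => i.
  by apply/ffunP => i; rewrite !ffunE subKn // (forallP Hp i).
by apply/forallP => i; rewrite ffunE leq_subr.
Qed.

End Segments.

Section Dual.
Variables (k : nat) (L : kgraph_data k) (HL : is_kgraph L) (p : Nk k).
Local Notation C := (kg_cat L).
Local Notation d := (@kg_deg k L).

Definition dual_obj := {v : Mor C | d v == p}.
Definition dual_mor := {l : Mor C | Nk_le p (d l)}.

Definition dual_cod (l : dual_mor) : dual_obj :=
  exist _ (seg (val l) (Nk_zero k) p)
    (introT eqP (seg_range_deg HL (valP l))).

Definition dual_dom (l : dual_mor) : dual_obj :=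
  exist _ (seg (val l) (Nk_sub (d (val l)) p) (d (val l)))
    (introT eqP (seg_source_deg HL (valP l))).

Definition dual_idm (v : dual_obj) : dual_mor :=
  exist _ (val v) (introT idP
    (eq_ind_r (fun x => Nk_le p x) (introT forallP (fun i => leqnn (p i)))
       (elimT eqP (valP v)))).

(* λ ∘_p μ = λ μ(p, d(μ)); the fallback value λ is only used when the
   result does not lie in pΛ (which does not happen for composable pairs) *)
Definition dual_comp (l m : dual_mor) : dual_mor :=
  insubd l (comp (val l) (seg (val m) p (d (val m)))).

Definition dual_deg (l : dual_mor) : Nk k := Nk_sub (d (val l)) p.

Definition dual_cat : cat_data :=
  @CatData dual_obj dual_mor dual_dom dual_cod dual_idm dual_comp.

Definition dual : kgraph_data k := @KGraphData k dual_cat dual_deg.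

End Dual.

(* Main.v *)
Require Import Defs.
From mathcomp Require Import all_boot.
From mathcomp Require Import zify.
Set Implicit Arguments. Unset Strict Implicit. Unset Printing Implicit Defensive.
Local Notation comp := Defs.comp (only parsing).

Ltac nk_solve :=
  let i := fresh "i" in
  (apply/ffunP => i || apply/forallP => i);
  repeat match goal with
  | H : _ = _ |- _ => move: (congr1 (fun f : Nk _ => f i) H); clear H
  | H : is_true (Nk_le _ _) |- _ => move: (forallP H i); clear H
  end;
  rewrite /Nk_add /Nk_sub /Nk_zero /= ?ffunE; lia.

Section Aux.
Variables (k : nat) (L : kgraph_data k) (HL : is_kgraph L).
Local Notation C := (kg_cat L).
Local Notation d := (@kg_deg k L).

Lemma cat_ok : is_category C. Proof. by case: HL. Qed.
Lemma dom_comp (f g : Mor C) : composable f g -> dom (comp f g) = dom g.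
Proof. by move=> H; have [_ [H' _]] := cat_ok; case: (H' f g H). Qed.
Lemma cod_comp (f g : Mor C) : composable f g -> cod (comp f g) = cod f.
Proof. by move=> H; have [_ [H' _]] := cat_ok; case: (H' f g H). Qed.
Lemma dom_id a : dom (idm a : Mor C) = a. Proof. by have [H _] := cat_ok; case: (H a). Qed.
Lemma cod_id a : cod (idm a : Mor C) = a. Proof. by have [H _] := cat_ok; case: (H a). Qed.
Lemma comp_idl (f : Mor C) : comp (idm (cod f)) f = f.
Proof. by have [_ [_ [H _]]] := cat_ok; case: (H f). Qed.
Lemma comp_idr (f : Mor C) : comp f (idm (dom f)) = f.
Proof. by have [_ [_ [H _]]] := cat_ok; case: (H f). Qed.
Lemma assoc (f g h : Mor C) : composable f g -> composable g h ->
  comp (comp f g) h = comp f (comp g h).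
Proof. by have [_ [_ [_ H]]] := cat_ok; apply: H. Qed.
Lemma d_id a : d (idm a) = Nk_zero k. Proof. by case: HL. Qed.
Lemma d_comp (f g : Mor C) : composable f g -> d (comp f g) = Nk_add (d f) (d g).
Proof. by case: HL => _ _ _ H _; apply: H. Qed.

Lemma fact_uniq (l a b a' b' : Mor C) : composable a b -> composable a' b' ->
  l = comp a b -> l = comp a' b' -> d a = d a' -> a = a' /\ b = b'.
Proof.
move=> Hab Hab' El El' Ea.
have [_ _ _ _ Hfac] := HL.
have Hdl : d l = Nk_add (d a) (d b) by rewrite El d_comp.
have Hdl' : d l = Nk_add (d a') (d b') by rewrite El' d_comp.
have Eb : d b' = d b by move: Hdl Hdl' Ea; clear; intros; nk_solve.
have [[x y] [_ Hu]] := Hfac l _ _ Hdl.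
have E1 := Hu (a, b) (And4 erefl erefl Hab El).
have E2 := Hu (a', b') (And4 (esym Ea) Eb Hab' El').
by rewrite E1 in E2; case: E2.
Qed.

Lemma seg_unique (l al mu be : Mor C) a b : composable al mu -> composable mu be ->
  l = comp al (comp mu be) -> d al = a -> Nk_add a (d mu) = b -> seg l a b = mu.
Proof.
move=> H1 H2 El Ea Eb.
have Hcab : composable al (comp mu be) by rewrite /composable cod_comp.
have Hdl : d l = Nk_add a (Nk_add (d mu) (d be)) by rewrite El !d_comp // Ea.
have Hal : Nk_le a (d l) by move: Hdl; clear; intros; nk_solve.
have [F1 F2 F3 F4] := factor_spec HL Hal.
have [_ E2] := fact_uniq F3 Hcab F4 El (etrans F1 (esym Ea)).
rewrite /seg E2.
have Hba : Nk_le (Nk_sub b a) (d (comp mu be)).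
  rewrite d_comp //; move: Eb; clear; intros; nk_solve.
have [G1 G2 G3 G4] := factor_spec HL Hba.
have Eba : Nk_sub b a = d mu by move: Eb; clear; intros; nk_solve.
have [E3 _] := fact_uniq G3 H2 G4 erefl (etrans G1 Eba).
exact E3.
Qed.

Lemma seg_left (l mu be : Mor C) b : composable mu be -> l = comp mu be ->
  d mu = b -> seg l (Nk_zero k) b = mu.
Proof.
move=> H El Eb; apply: (seg_unique (al := idm (cod mu)) (be := be)) => //.
- by rewrite /composable dom_id.
- by rewrite -assoc ?comp_idl // /composable dom_id.
- by rewrite d_id.
- move: Eb; clear; intros; nk_solve.
Qed.

Lemma seg_right (l al mu : Mor C) a : composable al mu -> l = comp al mu ->
  d al = a -> seg l a (d l) = mu.
Proof.
move=> H El Ea; apply: (seg_unique (al := al) (be := idm (dom mu))) => //.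
- by rewrite /composable cod_id.
- by rewrite comp_idr.
- by rewrite El d_comp // Ea.
Qed.

Lemma split_at (l : Mor C) a : Nk_le a (d l) -> exists x y,
  [/\ composable x y, l = comp x y, d x = a & d y = Nk_sub (d l) a].
Proof. move=> H; have [H1 H2 H3 H4] := factor_spec HL H; by exists (factor l a).1, (factor l a).2. Qed.

End Aux.

Section Dual2.
Variables (k : nat) (L : kgraph_data k) (HL : is_kgraph L) (p : Nk k).
Local Notation C := (kg_cat L).
Local Notation d := (@kg_deg k L).
Local Notation r l := (seg l (Nk_zero k) p).
Local Notation s l := (seg l (Nk_sub (d l) p) (d l)).
Local Notation t l := (seg l p (d l)).

Lemma dval (l : dual_mor L p) : Nk_le p (d (val l)). Proof. exact: valP l. Qed.
Lemma vval (v : dual_obj L p) : d (val v) = p. Proof. exact: eqP (valP v). Qed.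

Lemma decomp_r (l : Mor C) : Nk_le p (d l) ->
  [/\ composable (r l) (t l), l = comp (r l) (t l), d (r l) = p & d (t l) = Nk_sub (d l) p].
Proof.
move=> H; have [x [y [H1 H2 H3 H4]]] := split_at HL H.
by rewrite (seg_left HL H1 H2 H3) (seg_right HL H1 H2 H3).
Qed.

Lemma decomp_s (l : Mor C) : Nk_le p (d l) -> exists l0,
  [/\ composable l0 (s l), l = comp l0 (s l), d l0 = Nk_sub (d l) p & d (s l) = p].
Proof.
move=> H.
have H' : Nk_le (Nk_sub (d l) p) (d l) by move: H; clear; intros; nk_solve.
have [x [y [H1 H2 H3 H4]]] := split_at HL H'.
rewrite (seg_right HL H1 H2 H3); exists x; split => //.
by rewrite H4; move: H; clear; intros; nk_solve.
Qed.

Lemma vert_r (v : Mor C) : d v = p -> r v = v.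
Proof.
move=> H; apply: (seg_left HL (be := idm (dom v))) => //.
- by rewrite /composable cod_id.
- by rewrite comp_idr.
Qed.

Lemma vert_s (v : Mor C) : d v = p -> s v = v.
Proof.
move=> H; apply: (seg_unique HL (al := idm (cod v)) (be := idm (dom v))).
- by rewrite /composable dom_id.
- by rewrite /composable cod_id.
- by rewrite comp_idr // comp_idl.
- rewrite d_id //; move: H; clear; intros; nk_solve.
- move: H; clear; intros; nk_solve.
Qed.

Lemma vert_t (v : Mor C) : d v = p -> t v = idm (dom v).
Proof.
move=> H; apply: (seg_right HL (al := v)) => //.
- by rewrite /composable cod_id.
- by rewrite comp_idr.
Qed.

Lemma dom_s (l : Mor C) : Nk_le p (d l) -> dom (s l) = dom l.
Proof. move=> H; have [l0 [H1 H2 _ _]] := decomp_s H; by transitivity (dom (comp l0 (s l))); [rewrite dom_comp | rewrite -H2]. Qed.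
Lemma cod_r (l : Mor C) : Nk_le p (d l) -> cod (r l) = cod l.
Proof. move=> H; have [H1 H2 _ _] := decomp_r H; by transitivity (cod (comp (r l) (t l))); [rewrite cod_comp | rewrite -H2]. Qed.

Lemma dcomposable (f g : dual_mor L p) : dual_dom HL f = dual_cod HL g ->
  composable (val f) (t (val g)).
Proof.
move=> H; have Hs := congr1 val H; simpl in Hs.
have [H1 _ _ _] := decomp_r (dval g).
by rewrite /composable -H1 -Hs dom_s // dval.
Qed.

Lemma comp_val (f g : dual_mor L p) : dual_dom HL f = dual_cod HL g ->
  val (dual_comp f g) = comp (val f) (t (val g)).
Proof.
move=> H; have Hc := dcomposable H.
have Hle : Nk_le p (d (comp (val f) (t (val g)))).
  have [_ _ _ E] := decomp_r (dval g).
  rewrite d_comp // E; have := dval f; have := dval g; clear; intros; nk_solve.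
by rewrite /dual_comp val_insubd /= Hle.
Qed.


Lemma s_of (l a b : Mor C) : composable a b -> l = comp a b -> d b = p -> s l = b.
Proof.
move=> H1 H2 H3; apply: (seg_right HL H1 H2).
rewrite H2 d_comp // H3; clear; nk_solve.
Qed.

Lemma r_of (l a b : Mor C) : composable a b -> l = comp a b -> d a = p -> r l = a.
Proof. move=> H1 H2 H3; exact: (seg_left HL H1 H2). Qed.

Lemma t_of (l a b : Mor C) : composable a b -> l = comp a b -> d a = p -> t l = b.
Proof. move=> H1 H2 H3; rewrite -H3; exact: (seg_right HL H1 H2). Qed.

Lemma id_dom (a : dual_obj L p) : dual_dom HL (dual_idm a) = a.
Proof. apply: val_inj; exact: vert_s (vval a). Qed.
Lemma id_cod (a : dual_obj L p) : dual_cod HL (dual_idm a) = a.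
Proof. apply: val_inj; exact: vert_r (vval a). Qed.

Lemma dom_dcomp (f g : dual_mor L p) (H : dual_dom HL f = dual_cod HL g) :
  dual_dom HL (dual_comp f g) = dual_dom HL g.
Proof.
apply: val_inj; rewrite /= (comp_val H).
have Hc := dcomposable H.
have Hs : s (val f) = r (val g) := congr1 val H.
have [f0 [F1 F2 F3 F4]] := decomp_s (dval f).
have [G1 G2 G3 G4] := decomp_r (dval g).
have [g0 [K1 K2 K3 K4]] := decomp_s (dval g).
have E1 : comp (val f) (t (val g)) = comp f0 (val g).
  rewrite F2 assoc //; first by rewrite Hs -G2.
  by rewrite /composable Hs.
have Cfg : composable f0 g0.
  rewrite /composable F1 Hs cod_r ?dval //.
  by transitivity (cod (comp g0 (s (val g)))); [rewrite -K2 | rewrite cod_comp].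
have E2 : comp f0 (val g) = comp (comp f0 g0) (s (val g)).
  by rewrite assoc // -K2.
rewrite E1 E2; apply: s_of => //.
by rewrite /composable dom_comp.
Qed.

Lemma cod_dcomp (f g : dual_mor L p) (H : dual_dom HL f = dual_cod HL g) :
  dual_cod HL (dual_comp f g) = dual_cod HL f.
Proof.
apply: val_inj; rewrite /= (comp_val H).
have Hc := dcomposable H.
have [R1 R2 R3 R4] := decomp_r (dval f).
have Ctt : composable (t (val f)) (t (val g)).
  rewrite /composable.
  transitivity (dom (comp (r (val f)) (t (val f)))); first by rewrite dom_comp.
  by rewrite -R2.
apply: (r_of (b := comp (t (val f)) (t (val g)))) => //.
  by rewrite /composable cod_comp.
by rewrite -assoc // -R2.
Qed.

Lemma dcomp_idl (f : dual_mor L p) : dual_comp (dual_idm (dual_cod HL f)) f = f.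
Proof.
apply: val_inj; rewrite (comp_val (id_dom _)) /=.
by have [_ E _ _] := decomp_r (dval f).
Qed.

Lemma dcomp_idr (f : dual_mor L p) : dual_comp f (dual_idm (dual_dom HL f)) = f.
Proof.
apply: val_inj; rewrite (comp_val (esym (id_cod _))) /=.
rewrite vert_t ?seg_source_deg ?dval // dom_s ?dval //.
by rewrite comp_idr.
Qed.

Lemma dcomp_assoc (f g h : dual_mor L p) : dual_dom HL f = dual_cod HL g ->
  dual_dom HL g = dual_cod HL h ->
  dual_comp (dual_comp f g) h = dual_comp f (dual_comp g h).
Proof.
move=> Hfg Hgh.
have Hfgh : dual_dom HL (dual_comp f g) = dual_cod HL h by rewrite dom_dcomp.
have Hfgh' : dual_dom HL f = dual_cod HL (dual_comp g h) by rewrite cod_dcomp.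
apply: val_inj; rewrite (comp_val Hfgh) (comp_val Hfg) (comp_val Hfgh') (comp_val Hgh).
have C1 := dcomposable Hfg.
have C2 := dcomposable Hgh.
have [G1 G2 G3 G4] := decomp_r (dval g).
have C3 : composable (t (val g)) (t (val h)).
  rewrite /composable.
  transitivity (dom (comp (r (val g)) (t (val g)))); first by rewrite dom_comp.
  by rewrite -G2.
rewrite (t_of (l := comp (val g) (t (val h))) (a := r (val g)) (b := comp (t (val g)) (t (val h)))) //.
- by rewrite assoc.
- by rewrite /composable cod_comp.
- by rewrite -assoc // -G2.
Qed.


Lemma dual_fact (l : dual_mor L p) (m n : Nk k) (Hd : dual_deg l = Nk_add m n) :
  exists! mn : dual_mor L p * dual_mor L p,
    [/\ dual_deg mn.1 = m, dual_deg mn.2 = n, dual_dom HL mn.1 = dual_cod HL mn.2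
       & l = dual_comp mn.1 mn.2].
Proof.
have Hl := dval l.
have Hm : Nk_le m (d (val l)) by move: Hd Hl; rewrite /dual_deg; clear; intros; nk_solve.
have [x [yz [X1 X2 X3 X4]]] := split_at HL Hm.
have Hp : Nk_le p (d yz).
  by rewrite X4; move: Hd Hl; rewrite /dual_deg; clear; intros; nk_solve.
have [y [z [Y1 Y2 Y3 Y4]]] := split_at HL Hp.
have Cxy : composable x y.
  rewrite /composable X1 Y2 cod_comp //.
have Hxy : Nk_le p (d (comp x y)) by rewrite d_comp // Y3; clear; nk_solve.
pose mu : dual_mor L p := exist _ (comp x y) Hxy.
pose nu : dual_mor L p := exist _ yz Hp.
have Hmn : dual_dom HL mu = dual_cod HL nu.
  apply: val_inj => /=.
  rewrite (s_of (l := comp x y) (a := x) (b := y)) //.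
  by rewrite (r_of (l := yz) (a := y) (b := z)).
have Cyz : composable x (comp y z) by rewrite -Y2.
exists (mu, nu); split.
+ split => //=.
  * rewrite /dual_deg /= d_comp // Y3 X3; clear; nk_solve.
  * rewrite /dual_deg /= X4; move: Hd Hl; rewrite /dual_deg; clear; intros; nk_solve.
  * apply: val_inj; rewrite (comp_val Hmn) /=.
    by rewrite (t_of (l := yz) (a := y) (b := z)) // assoc // -Y2 -X2.
+ move=> [mu' nu'] /= [D1 D2 H' E'].
  have E0 : val l = comp (val mu') (t (val nu')) by rewrite E' (comp_val H').
  have [m0 [M1 M2 M3 M4]] := decomp_s (dval mu').
  have [N1 N2 N3 N4] := decomp_r (dval nu').
  have Hs : s (val mu') = r (val nu') := congr1 val H'.
  have Cst : composable (s (val mu')) (t (val nu')) by rewrite /composable Hs.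
  have E1 : val l = comp m0 (val nu').
    rewrite E0 M2 assoc //; by rewrite Hs -N2.
  have Cm0 : composable m0 (val nu').
    by rewrite /composable M1 Hs cod_r ?dval.
  have Dx : d x = d m0.
    rewrite X3 M3; move: D1; rewrite /dual_deg; clear; intros; nk_solve.
  have [Ex Eyz] := fact_uniq HL X1 Cm0 X2 E1 Dx.
  have Cmt := dcomposable H'.
  have Cxyz : val l = comp (comp x y) z by rewrite assoc // -Y2.
  have Cxy_z : composable (comp x y) z by rewrite /composable dom_comp.
  have Dxy : d (comp x y) = d (val mu').
    rewrite d_comp // X3 Y3; move: D1 (dval mu'); rewrite /dual_deg; clear; intros; nk_solve.
  have [Emu _] := fact_uniq HL Cxy_z Cmt Cxyz E0 Dxy.
  by congr pair; apply: val_inj => /=.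

Qed.

End Dual2.

Theorem proposition3p2 (k : nat) (hk : 1 <= k) (L : kgraph_data k)
  (HL : is_kgraph L) (p : Nk k) :
  is_kgraph (dual HL p).
Proof.
have [_ [[fM HM] [fO HO]] _ _ _] := HL.
rewrite /is_kgraph /=; split.
- split; first by move=> a; split; [exact: id_dom | exact: id_cod].
  split; first by move=> f g H; split; [exact: dom_dcomp | exact: cod_dcomp].
  split; first by move=> f; split; [exact: dcomp_idl | exact: dcomp_idr].
  move=> f g h; exact: dcomp_assoc.
- split.
  + exists (fun x : dual_obj L p => fO (val x)) => x y /HO /val_inj //.
  + exists (fun x : dual_mor L p => fO (val x)) => x y /HO /val_inj //.
- move=> a; rewrite /dual_deg /=; have := vval a; clear; intros; nk_solve.
- move=> f g H; rewrite /dual_deg (comp_val H) (d_comp HL (dcomposable H)).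
  have [_ _ _ E] := decomp_r HL (dval g); rewrite E.
  have := dval f; have := dval g; clear; intros; nk_solve.
- exact: dual_fact.
Qed.
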